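(* Let $r,s,N$ be integers with $N\ge 1$, let $F=\{(x,y)\in\mathbb{Z}^2: x\ge r,\ y\le s+N,\ x-y\le r-s\}$ and $D=\{(x,y)\in\mathbb{Z}^2: r-s-N\le x-y\le r-s\}$. Let $t$ be a partial $\mathrm{SL}_2$-tiling defined on $F$ such that $t_{xy}=1$ for all $(x,y)\in F$ with $x-y=r-s$, and $t_{r,s+N}=1$. Then there is a friese defined on $D$ which agrees with $t$ on $F$.
   Context: A partial $\mathrm{SL}_2$-tiling defined on $E\subseteq\mathbb{Z}^2$ is a map $t:E\to\{1,2,3,\dots\}$ such that $t_{xy}t_{x+1,y+1}-t_{x,y+1}t_{x+1,y}=1$ whenever all four points $(x,y),(x,y+1),(x+1,y),(x+1,y+1)$ lie in $E$. For integers $c<c'$, a friese on the diagonal band $D=\{(x,y)\in\mathbb{Z}^2: c\le x-y\le c'\}$ is a partial $\mathrm{SL}_2$-tiling defined on $D$ with $t_{xy}=1$ whenever $x-y=c$ or $x-y=c'$. *)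

(* Defs.v *)
From Stdlib Require Import ZArith.
Open Scope Z_scope.

Definition region := Z -> Z -> Prop.

(* A partial SL_2-tiling defined on E: values on E are positive integers
   (values outside E are irrelevant), and every unit square contained in E
   has determinant 1. *)
Definition partial_SL2_tiling (E : region) (t : Z -> Z -> Z) : Prop :=
  (forall x y, E x y -> 1 <= t x y) /\
  (forall x y, E x y -> E x (y + 1) -> E (x + 1) y -> E (x + 1) (y + 1) ->
     t x y * t (x + 1) (y + 1) - t x (y + 1) * t (x + 1) y = 1).

Definition band (c c' : Z) : region := fun x y => c <= x - y <= c'.

Definition friese (c c' : Z) (t : Z -> Z -> Z) : Prop :=
  partial_SL2_tiling (band c c') t /\
  (forall x y, x - y = c -> t x y = 1) /\
  (forall x y, x - y = c' -> t x y = 1).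

Definition regionF (r s N : Z) : region :=
  fun x y => r <= x /\ y <= s + N /\ x - y <= r - s.

(* Main.v *)
Require Import Defs.
From Stdlib Require Import ZArith Lia.
Open Scope Z_scope.

Definition inF (N p q : Z) : Prop := p <= 0 < q /\ q - p <= N + 1.

Definition Good (N : Z) (u : Z -> Z -> Z) : Prop :=
  1 <= N /\
  (forall p q, inF N p q -> 1 <= u p q) /\
  (forall p q, inF N p q -> inF N p (q+1) -> inF N (p+1) q -> inF N (p+1) (q+1) ->
     u p q * u (p+1) (q+1) - u (p+1) q * u p (q+1) = 1) /\
  (forall p q, inF N p q -> q - p = N + 1 -> u p q = 1) /\
  u 0 1 = 1.

Ltac fin := unfold inF; lia.

Lemma loc N u : Good N u -> forall p j, -N+1 <= p <= -1 -> 1 <= j <= p+N-1 ->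
  u p (j+1) * (u (p-1) j + u (p+1) j) = u p j * (u (p-1) (j+1) + u (p+1) (j+1)).
Proof.
  intros (HN & Hpos & Hsq & Htop & Hap) p j Hp Hj.
  pose proof (Hsq (p-1) j ltac:(fin) ltac:(fin) ltac:(fin) ltac:(fin)) as h1.
  pose proof (Hsq p j ltac:(fin) ltac:(fin) ltac:(fin) ltac:(fin)) as h2.
  replace (p-1+1) with p in h1 by ring.
  lia.
Qed.

Lemma RL N u : Good N u -> forall p, -N+1 <= p <= -1 -> forall k : nat,
  1 + Z.of_nat k <= p + N ->
  u p 1 * (u (p-1) (1 + Z.of_nat k) + u (p+1) (1 + Z.of_nat k))
  = u p (1 + Z.of_nat k) * (u (p-1) 1 + u (p+1) 1).
Proof.
  intros G p Hp k. induction k as [|k IH]; intros Hk.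
  - simpl. ring.
  - rewrite Nat2Z.inj_succ in Hk |- *.
    replace (1 + Z.succ (Z.of_nat k)) with ((1 + Z.of_nat k) + 1) in * by lia.
    set (j := 1 + Z.of_nat k) in *.
    pose proof (IH ltac:(lia)) as IH'.
    pose proof (loc N u G p j Hp ltac:(lia)) as hl.
    destruct G as (HN & Hpos & Hsq & Htop & Hap).
    pose proof (Hpos p j ltac:(fin)) as hp.
    apply (Z.mul_reg_l _ _ (u p j)); [lia|].
    transitivity (u p 1 * (u p j * (u (p - 1) (j + 1) + u (p + 1) (j + 1)))); [ring|].
    rewrite <- hl.
    transitivity (u p (j+1) * (u p 1 * (u (p - 1) j + u (p + 1) j))); [ring|].
    rewrite IH'. ring.
Qed.

Lemma RL' N u : Good N u -> forall p j, -N+1 <= p <= -1 -> 1 <= j <= p + N ->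
  u p 1 * (u (p-1) j + u (p+1) j) = u p j * (u (p-1) 1 + u (p+1) 1).
Proof.
  intros G p j Hp Hj.
  pose proof (RL N u G p Hp (Z.to_nat (j-1))) as h.
  rewrite Z2Nat.id in h by lia.
  replace (1 + (j-1)) with j in h by ring. apply h. lia.
Qed.

Lemma Lcst N u : Good N u -> forall q, 2 <= q <= N -> forall k : nat,
  q - N - 1 + Z.of_nat k <= -1 ->
  let p := q - N - 1 + Z.of_nat k in
  u p 1 * u (p+1) q - u p q * u (p+1) 1 = u (q - N - 2) 1.
Proof.
  intros G q Hq k. induction k as [|k IH]; intros Hk p.
  - subst p. simpl. replace (q - N - 1 + 0) with (q-N-1) by ring.
    pose proof (RL' N u G (q-N-1) (q-1) ltac:(lia) ltac:(lia)) as hr.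
    destruct G as (HN & Hpos & Hsq & Htop & Hap).
    pose proof (Hsq (q-N-1) (q-1) ltac:(fin) ltac:(fin) ltac:(fin) ltac:(fin)) as hs.
    replace (q-1+1) with q in hs by ring.
    pose proof (Htop (q-N-1) q ltac:(fin) ltac:(lia)) as t1.
    pose proof (Htop (q-N-1-1) (q-1) ltac:(fin) ltac:(lia)) as t2.
    pose proof (Hpos (q-N-1) (q-1) ltac:(fin)) as hp.
    replace (q-N-1-1) with (q-N-2) in * by ring.
    rewrite t1 in hs |- *. rewrite t2 in hr.
    assert (E : u (q-N-1) 1 * u (q-N-1+1) q = u (q-N-2) 1 + u (q-N-1+1) 1).
    { apply (Z.mul_reg_l _ _ (u (q-N-1) (q-1))); [lia|]. nia. }
    lia.
  - rewrite Nat2Z.inj_succ in Hk. subst p. rewrite Nat2Z.inj_succ.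
    pose proof (IH ltac:(lia)) as IH'. simpl in IH'.
    set (p0 := q - N - 1 + Z.of_nat k) in *.
    replace (q - N - 1 + Z.succ (Z.of_nat k)) with (p0 + 1) by (subst p0; lia).
    pose proof (RL' N u G (p0+1) q ltac:(lia) ltac:(lia)) as hr.
    replace (p0+1-1) with p0 in hr by ring.
    replace (p0+1+1) with (p0+2) in * by ring.
    lia.
Qed.

Lemma Kq N u : Good N u -> forall q, 2 <= q <= N ->
  u (-1) 1 * u 0 q - u (-1) q * u 0 1 = u (q - N - 2) 1.
Proof.
  intros G q Hq.
  pose proof (Lcst N u G q Hq (Z.to_nat (N - q))) as h.
  rewrite Z2Nat.id in h by lia.
  replace (q - N - 1 + (N - q)) with (-1) in h by ring.
  apply h. lia.
Qed.

Lemma Tq N u : Good N u -> forall q, 2 <= q <= N ->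
  u 0 q * u (q + 1 - (N+2)) 1 - u 0 (q+1) * u (q - (N+2)) 1 = 1.
Proof.
  intros G q Hq.
  pose proof (Kq N u G q Hq) as k1.
  pose proof G as G0. destruct G0 as (HN & Hpos & Hsq & Htop & Hap).
  rewrite Hap in k1.
  replace (q - (N+2)) with (q - N - 2) by ring.
  destruct (Z.eq_dec q N) as [->|Hne].
  - pose proof (Htop 0 (N+1) ltac:(fin) ltac:(lia)) as t1.
    pose proof (Htop (-1) N ltac:(fin) ltac:(lia)) as t2.
    rewrite t1. rewrite t2 in k1.
    replace (N + 1 - (N+2)) with (-1) by ring. lia.
  - pose proof (Kq N u G (q+1) ltac:(lia)) as k2.
    rewrite Hap in k2.
    replace (q + 1 - N - 2) with (q + 1 - (N+2)) in k2 by ring.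
    pose proof (Hsq (-1) q ltac:(fin) ltac:(fin) ltac:(fin) ltac:(fin)) as hs.
    replace (-1+1) with 0 in hs by ring.
    rewrite <- k1, <- k2. lia.
Qed.

Definition Eext (u : Z -> Z -> Z) (N p q : Z) : Z :=
  let m := (N+2) * (- p / (N+2)) in
  if Z_le_dec 1 (q + m) then u (p + m) (q + m) else u (q + m) (p + m + (N+2)).

Lemma div_bounds (a n : Z) : 0 < n -> n * (a / n) <= a < n * (a / n) + n.
Proof.
  intros Hn. pose proof (Z.div_mod a n ltac:(lia)). pose proof (Z.mod_pos_bound a n Hn). lia.
Qed.

Lemma E_trans N u p q k a b : 1 <= N -> 1 <= q - p <= N + 1 ->
  p + (N+2)*k <= 0 < q + (N+2)*k -> a = p + (N+2)*k -> b = q + (N+2)*k ->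
  Eext u N p q = u a b.
Proof.
  intros HN Hb Hk -> ->. unfold Eext.
  pose proof (div_bounds (-p) (N+2) ltac:(lia)) as D.
  set (d := - p / (N+2)) in *.
  assert (k = d) as -> by nia.
  destruct (Z_le_dec 1 (q + (N+2)*d)); [reflexivity|lia].
Qed.

Lemma E_glide N u p q k a b : 1 <= N -> 1 <= q - p <= N + 1 ->
  q + (N+2)*k <= 0 < p + (N+2)*k + (N+2) -> a = q + (N+2)*k -> b = p + (N+2)*k + (N+2) ->
  Eext u N p q = u a b.
Proof.
  intros HN Hb Hk -> ->. unfold Eext.
  pose proof (div_bounds (-p) (N+2) ltac:(lia)) as D.
  set (d := - p / (N+2)) in *.
  assert (k = d) as -> by nia.
  destruct (Z_le_dec 1 (q + (N+2)*d)); [lia|reflexivity].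
Qed.

Lemma E_rep N u p q : 1 <= N -> 1 <= q - p <= N + 1 ->
  (exists k, p + (N+2)*k <= 0 < q + (N+2)*k /\ Eext u N p q = u (p + (N+2)*k) (q + (N+2)*k)) \/
  (exists k, q + (N+2)*k <= 0 < p + (N+2)*k + (N+2) /\
     Eext u N p q = u (q + (N+2)*k) (p + (N+2)*k + (N+2))).
Proof.
  intros HN Hb.
  pose proof (div_bounds (-p) (N+2) ltac:(lia)) as D.
  destruct (Z_le_dec 1 (q + (N+2)*(-p/(N+2)))).
  - left. exists (-p/(N+2)). split; [lia|]. eapply E_trans; eauto; lia.
  - right. exists (-p/(N+2)). split; [lia|]. eapply E_glide; eauto; lia.
Qed.

Lemma E_sym N u p q : 1 <= N -> 1 <= q - p <= N + 1 ->
  Eext u N p q = Eext u N q (p + (N+2)).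
Proof.
  intros HN Hb.
  destruct (E_rep N u p q HN Hb) as [[k [Hk ->]]|[k [Hk ->]]].
  - symmetry. apply (E_glide N u q (p+(N+2)) (k-1)); try lia.
  - symmetry. apply (E_trans N u q (p+(N+2)) k); try lia.
Qed.

Lemma E_F N u p q : 1 <= N -> inF N p q -> Eext u N p q = u p q.
Proof.
  intros HN H. unfold inF in H. apply (E_trans N u p q 0); lia.
Qed.

Lemma E_pos N u : Good N u -> forall p q, 1 <= q - p <= N + 1 -> 1 <= Eext u N p q.
Proof.
  intros G p q Hb. destruct G as (HN & Hpos & _).
  destruct (E_rep N u p q HN Hb) as [[k [Hk ->]]|[k [Hk ->]]]; apply Hpos; fin.
Qed.

Lemma E_one N u : Good N u -> forall p q, (q - p = 1 \/ q - p = N + 1) -> Eext u N p q = 1.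
Proof.
  intros G p q Hb. destruct G as (HN & Hpos & Hsq & Htop & Hap).
  destruct (E_rep N u p q HN ltac:(lia)) as [[k [Hk ->]]|[k [Hk ->]]].
  - destruct Hb as [Hb|Hb].
    + replace (p + (N+2)*k) with 0 by lia. replace (q + (N+2)*k) with 1 by lia. exact Hap.
    + apply Htop; fin.
  - destruct Hb as [Hb|Hb].
    + apply Htop; fin.
    + replace (q + (N+2)*k) with 0 by lia. replace (p + (N+2)*k + (N+2)) with 1 by lia. exact Hap.
Qed.

Definition Dl u N p q := Eext u N p q * Eext u N (p+1) (q+1) - Eext u N (p+1) q * Eext u N p (q+1).

Lemma D_sym N u p q : 1 <= N -> 2 <= q - p <= N ->
  Dl u N p q = Dl u N (q - (N+2)) p.
Proof.
  intros HN Hb. unfold Dl.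
  rewrite (E_sym N u (q-(N+2)) p) by lia.
  rewrite (E_sym N u (q-(N+2)+1) (p+1)) by lia.
  rewrite (E_sym N u (q-(N+2)+1) p) by lia.
  rewrite (E_sym N u (q-(N+2)) (p+1)) by lia.
  replace (q - (N+2) + (N+2)) with q by ring.
  replace (q - (N+2) + 1 + (N+2)) with (q+1) by ring.
  ring.
Qed.

Lemma D_p0 N u : Good N u -> forall p q, p <= 0 -> 2 <= q - p <= N -> 1 <= q -> Dl u N p q = 1.
Proof.
  intros G p q Hp Hb Hq. pose proof G as G0. destruct G0 as (HN & Hpos & Hsq & Htop & Hap).
  unfold Dl.
  destruct (Z.eq_dec p 0) as [->|Hne].
  - rewrite (E_F N u 0 q), (E_F N u 0 (q+1)) by fin.
    assert (e1 : Eext u N (0+1) (q+1) = u (q + 1 - (N+2)) 1).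
    { rewrite <- (E_F N u (q+1-(N+2)) 1) by fin. rewrite (E_sym N u (q+1-(N+2)) 1) by lia.
      f_equal; ring. }
    assert (e2 : Eext u N (0+1) q = u (q - (N+2)) 1).
    { rewrite <- (E_F N u (q-(N+2)) 1) by fin. rewrite (E_sym N u (q-(N+2)) 1) by lia.
      f_equal; ring. }
    rewrite e1, e2. pose proof (Tq N u G q ltac:(lia)). lia.
  - rewrite !E_F by fin. apply Hsq; fin.
Qed.

Lemma D_neg N u : Good N u -> forall k : nat, forall p q, p <= 0 -> 2 <= q - p <= N ->
  1 - q <= Z.of_nat k -> Dl u N p q = 1.
Proof.
  intros G k. pose proof G as G0. destruct G0 as (HN & _).
  induction k as [|k IH]; intros p q Hp Hb Hk.
  - apply D_p0; auto; lia.
  - destruct (Z_le_dec 1 q). { apply D_p0; auto; lia. }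
    rewrite Nat2Z.inj_succ in Hk.
    assert (Dl u N p q = Dl u N q (p + (N+2))) as ->.
    { rewrite (D_sym N u q (p+(N+2))) by lia. f_equal; ring. }
    apply IH; lia.
Qed.

Lemma D_all N u : Good N u -> forall k : nat, forall p q, 2 <= q - p <= N ->
  p <= Z.of_nat k -> Dl u N p q = 1.
Proof.
  intros G k. pose proof G as G0. destruct G0 as (HN & _).
  induction k as [|k IH]; intros p q Hb Hk.
  - apply (D_neg N u G (Z.to_nat (1 - q))); try lia.
  - destruct (Z_le_dec p 0). { apply (D_neg N u G (Z.to_nat (1 - q))); lia. }
    rewrite Nat2Z.inj_succ in Hk.
    rewrite (D_sym N u p q) by lia. apply IH; lia.
Qed.

Theorem lemma7p1 (r s N : Z) (t : Z -> Z -> Z) :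
  1 <= N ->
  partial_SL2_tiling (regionF r s N) t ->
  (forall x y, regionF r s N x y -> x - y = r - s -> t x y = 1) ->
  t r (s + N) = 1 ->
  exists t' : Z -> Z -> Z,
    friese (r - s - N) (r - s) t' /\
    (forall x y, regionF r s N x y -> t' x y = t x y).
Proof.
  intros HN [Hpos Hsq] Htop Hap.
  set (u := fun p q => t (r + q - 1) (s + N + p)).
  assert (G : Good N u).
  { unfold Good, u, inF. split; [exact HN|]. split; [|split; [|split]].
    - intros p q H. apply Hpos. unfold regionF. lia.
    - intros p q H1 H2 H3 H4.
      pose proof (Hsq (r+q-1) (s+N+p)) as h. unfold regionF in h.
      replace (r + (q+1) - 1) with (r+q-1+1) by ring.
      replace (s + N + (p+1)) with (s+N+p+1) by ring.
      apply h; lia.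
    - intros p q H E. apply Htop; unfold regionF; lia.
    - replace (r + 1 - 1) with r by ring. replace (s + N + 0) with (s+N) by ring. exact Hap. }
  exists (fun x y => Eext u N (y - s - N) (x - r + 1)).
  split.
  - unfold friese, partial_SL2_tiling, band. split; [split|split].
    + intros x y H. apply (E_pos N u G). lia.
    + intros x y H1 H2 H3 H4.
      pose proof (D_all N u G (Z.to_nat (y - s - N)) (y - s - N) (x - r + 1) ltac:(lia) ltac:(lia)) as D.
      unfold Dl in D.
      replace (y + 1 - s - N) with (y - s - N + 1) by ring.
      replace (x + 1 - r + 1) with (x - r + 1 + 1) by ring.
      exact D.
    + intros x y H. apply (E_one N u G). lia.
    + intros x y H. apply (E_one N u G). lia.
  - intros x y H. unfold regionF in H. rewrite (E_F N u) by (unfold inF; lia).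
    unfold u. f_equal; ring.
Qed.
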